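(* For $n\ge2$ let $m=(n-1)^2$ and let $\Gamma_n$ be the $m\times m$ matrix indexed by $(i,j)\in\{1,\dots,n-1\}^2$ with $$(\Gamma_n)_{(i,j),(i',j')}=\begin{cases}1&(i,j)=(i',j'),\\-\frac1{n-1}& i=i'\text{ or }j=j'\text{ but not both},\\\frac1{(n-1)^2}& i\ne i'\text{ and }j\ne j'.\end{cases}$$ Order the indices row-major ($(1,1),(1,2),\dots,(1,n-1),(2,1),\dots$) and let $\Psi_n=\Gamma_n^{-1}$. Then $\sup_n\|\Psi_n\|_{\max}\le4$, and, with $a^{(n)}_1,\dots,a^{(n)}_m$ the inverse Schur complements of $\Psi_n$ defined in the context, for every $\alpha\ge1$ and every $n\ge2$, $$\sum_{k=1}^{m}(\alpha m)^{-a^{(n)}_k}\ \le\ g(\alpha):=\frac{1+2e^{4/e}+2e^{8/e}+e^{32/e}}{\alpha^{1/4}}.$$ In particular the sequence $(\Gamma_n)$ satisfies the Correlation Condition (in dimension $m=(n-1)^2$) with bounding function $g$.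
   Context: $\|M\|_{\max}=\max_{a,b}|M_{ab}|$. For an invertible $m\times m$ matrix with inverse $\Psi$, let $\Psi_{k}$ be the principal submatrix of the first $k$ rows and columns (in the given index order), partitioned as $\begin{bmatrix}\Psi^{(11)}_{k}&\Psi^{(12)}_{k}\\\Psi^{(21)}_{k}&\Psi^{(22)}_{k}\end{bmatrix}$ with $\Psi^{(11)}_{k}$ the leading $(k-1)\times(k-1)$ block and $\Psi^{(22)}_{k}$ the $(k,k)$ entry; set $a_1=\Psi_{11}^{-1}$ and $a_k=\big(\Psi^{(22)}_{k}-\Psi^{(21)}_{k}(\Psi^{(11)}_{k})^{-1}\Psi^{(12)}_{k}\big)^{-1}$ for $k\ge2$. The Correlation Condition for a sequence of invertible $m\times m$ correlation matrices requires $\sup\|\Psi\|_{\max}<\infty$ and $\sup\sum_{k=1}^m(\alpha m)^{-a_k}\le g(\alpha)$ for all $\alpha\ge1$, with $g$ decreasing, independent of the index of the sequence, and $g(\alpha)\to0$ as $\alpha\to\infty$. ($\Gamma_n$ is the correlation matrix of one increment of the $n\times n$ Diaconis–Gangolli walk restricted to the first $n-1$ rows and columns.) *)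

(* Defs.v *)
From HB Require Import structures.
From mathcomp Require Import all_boot all_order all_algebra.
From mathcomp Require Import all_classical all_reals all_analysis.
Set Implicit Arguments. Unset Strict Implicit. Unset Printing Implicit Defensive.
Import Order.TTheory GRing.Theory Num.Theory.
Local Open Scope ring_scope.

(* Gamma_n : the ((n-1)^2) x ((n-1)^2) matrix; the index k : 'I_((n-1)^2)
   (0-based) corresponds row-major to the pair (k %/ (n-1), k %% (n-1)). *)
Definition Gamma (R : realType) (n : nat) : 'M[R]_((n.-1) ^ 2) :=
  \matrix_(k, l)
    let i := (k %/ n.-1)%N in let j := (k %% n.-1)%N in
    let i' := (l %/ n.-1)%N in let j' := (l %% n.-1)%N in
    if (i == i') && (j == j') then 1
    else if (i == i') || (j == j') then - (n.-1%:R)^-1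
    else ((n.-1%:R) ^+ 2)^-1.

Definition maxnorm (R : realType) (m : nat) (M : 'M[R]_m) : R :=
  \big[Num.max/0]_(i < m) \big[Num.max/0]_(j < m) `|M i j|.

(* inverse Schur complement a_{t+1} for the 0-based index t : 'I_m:
   Psi_{t+1} has leading t x t block A, last column b, last row c and
   corner Psi t t; a = (Psi t t - c A^{-1} b)^{-1}.  For t = 0 the blocks
   are empty and this is Psi_11^{-1}, as in the paper. *)
Definition schur_inv (R : realType) (m : nat) (Psi : 'M[R]_m) (t : 'I_m) : R :=
  let w := widen_ord (ltnW (ltn_ord t)) in
  let A := \matrix_(i < t, j < t) Psi (w i) (w j) in
  let b := \col_(i < t) Psi (w i) t in
  let c := \row_(j < t) Psi t (w j) in
  (Psi t t - (c *m invmx A *m b) 0 0)^-1.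

Definition gfun (R : realType) (alpha : R) : R :=
  (1 + 2 * expR (4 / expR 1) + 2 * expR (8 / expR 1) + expR (32 / expR 1))
  / (alpha `^ (4%:R)^-1).

(* Main.v *)
Require Import Defs.
From HB Require Import structures.
From mathcomp Require Import all_boot all_order all_algebra.
From mathcomp Require Import all_classical all_reals all_analysis.
From mathcomp Require Import zify ring lra.
Import Order.TTheory GRing.Theory Num.Theory.
Local Open Scope ring_scope.
Set Implicit Arguments. Unset Strict Implicit. Unset Printing Implicit Defensive.

Definition quad (R : realType) m (M : 'M[R]_m) (x : 'I_m -> R) : R :=
  \sum_(k < m) \sum_(l < m) x k * x l * M k l.

Definition PDm (R : realType) m (M : 'M[R]_m) :=
  forall x : 'I_m -> R, (exists k, x k != 0) -> 0 < quad M x.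

Lemma quad_ge0 (R : realType) m (M : 'M[R]_m) x : PDm M -> 0 <= quad M x.
Proof.
move=> PD; case: (pselect (exists k, x k != 0)) => [h|h]; first exact/ltW/PD.
rewrite /quad big1 // => k _; rewrite big1 // => l _.
have -> : x k = 0 by apply/eqP; apply/negPn/negP => hk; apply: h; exists k.
by rewrite !mul0r.
Qed.

Lemma quadD (R : realType) m (M : 'M[R]_m) x y :
  (forall i j, M i j = M j i) ->
  quad M (fun k => x k + y k) =
  quad M x + 2 * \sum_(l < m) y l * \sum_(k < m) x k * M k l + quad M y.
Proof.
move=> sym; rewrite /quad.
have -> : \sum_(k < m) \sum_(l < m) (x k + y k) * (x l + y l) * M k l =
  \sum_(k < m) \sum_(l < m) x k * x l * M k l +
  (\sum_(k < m) \sum_(l < m) x k * y l * M k l +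
   \sum_(k < m) \sum_(l < m) y k * x l * M k l) +
  \sum_(k < m) \sum_(l < m) y k * y l * M k l.
  rewrite -!big_split /=; apply: eq_bigr => k _; rewrite -!big_split /=.
  by apply: eq_bigr => l _; ring.
congr (_ + _ + _).
have h1 : \sum_(k < m) \sum_(l < m) y k * x l * M k l =
          \sum_(k < m) \sum_(l < m) x k * y l * M k l.
  rewrite exchange_big; apply: eq_bigr => k _; apply: eq_bigr => l _.
  by rewrite sym; ring.
rewrite h1 exchange_big -mulr2n mulr_natl; congr (_ *+ 2).
apply: eq_bigr => l _; rewrite big_distrr; apply: eq_bigr => k _ /=; ring.
Qed.

Definition ext (R : realType) m (t : nat) (y : 'I_t -> R) : 'I_m -> R :=
  fun k => oapp y 0 (insub (val k)).

Arguments ext {R} m {t} y.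

Lemma ext_w (R : realType) m t (le : (t <= m)%N) (y : 'I_t -> R) i :
  ext m y (widen_ord le i) = y i.
Proof. by rewrite /ext /= valK. Qed.

Lemma ext_out (R : realType) m t (y : 'I_t -> R) (k : 'I_m) :
  ~~ (k < t)%N -> ext m y k = 0.
Proof. by move=> h; rewrite /ext insubF //; apply/negbTE. Qed.

Lemma sum_restr (R : realType) m t (le : (t <= m)%N) (G : 'I_m -> R) :
  (forall k : 'I_m, ~~ (k < t)%N -> G k = 0) ->
  \sum_(k < m) G k = \sum_(i < t) G (widen_ord le i).
Proof.
move=> H; rewrite -(big_ord_narrow le) [RHS]big_mkcond /=; apply: eq_bigr => k _.
by case: ifP => // /negbT /H.
Qed.

Lemma quad_restr (R : realType) m (M : 'M[R]_m) t (le : (t <= m)%N) x :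
  (forall k : 'I_m, ~~ (k < t)%N -> x k = 0) ->
  quad M x = \sum_(i < t) \sum_(j < t)
     x (widen_ord le i) * x (widen_ord le j) * M (widen_ord le i) (widen_ord le j).
Proof.
move=> hx; rewrite /quad (sum_restr le) => [|k hk]; last first.
  by rewrite big1 // => l _; rewrite hx // !mul0r.
apply: eq_bigr => i _; apply: sum_restr => l hl.
by rewrite (hx l hl) mulr0 mul0r.
Qed.

Lemma sum_single (R : realType) m (t : 'I_m) (G : 'I_m -> R) :
  (forall l, l != t -> G l = 0) -> \sum_(l < m) G l = G t.
Proof. by move=> H; rewrite (bigD1 t) //= big1 ?addr0. Qed.

Lemma schur_main (R : realType) m (M : 'M[R]_m) (t : 'I_m) (v : 'I_m -> R) :
  (forall i j, M i j = M j i) -> PDm M -> v t = 1 ->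
  (forall i : 'I_m, (t < i)%N -> v i = 0) ->
  0 < (schur_inv M t)^-1 /\ (schur_inv M t)^-1 <= quad M v.
Proof.
move=> sym PD vt vout.
rewrite /schur_inv invrK.
set le := ltnW (ltn_ord t).
set w := widen_ord le.
set A := \matrix_(i < t, j < t) M (w i) (w j).
set b := \col_(i < t) M (w i) t.
set c := \row_(j < t) M t (w j).
have uA : A \in unitmx.
  rewrite unitmxE unitfE; apply/negP => /det0P [y y0 yA].
  have [i yi] : exists i, y 0 i != 0.
    apply/existsP; apply: contraR y0 => /existsPn hy.
    by apply/eqP/rowP => j; rewrite mxE; apply/eqP/negPn.
  have : 0 < quad M (ext m (fun i => y 0 i)).
    by apply: PD; exists (w i); rewrite ext_w.
  suff -> : quad M (ext m (fun i => y 0 i)) = 0 by rewrite ltxx.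
  rewrite (quad_restr _ le); last by move=> k hk; rewrite ext_out.
  rewrite exchange_big big1 // => j _ /=.
  have -> : \sum_(i0 < t) ext m (fun i1 : 'I_t => y 0 i1) (w i0) *
      ext m (fun i1 : 'I_t => y 0 i1) (w j) * M (w i0) (w j) =
      y 0 j * (y *m A) 0 j.
    rewrite !mxE big_distrr; apply: eq_bigr => k _ /=.
    by rewrite !ext_w mxE; ring.
  by rewrite yA mxE mulr0.
set wv := c *m invmx A.
have wA : wv *m A = c by rewrite /wv mulmxKV.
set u := fun k : 'I_m => (k == t)%:R - ext m (fun i => wv 0 i) k.
have KF : forall l : 'I_m, (l < t)%N -> \sum_(k < m) u k * M k l = 0.
  move=> l hl.
  have -> : l = w (Ordinal hl) by apply: val_inj.
  set j := Ordinal hl.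
  rewrite /u.
  under eq_bigr => k _ do rewrite mulrBl.
  rewrite big_split /= sumrN (bigD1 t) //= eqxx mul1r big1 ?addr0; last first.
    by move=> k /negbTE ->; rewrite mul0r.
  rewrite (sum_restr le); last by move=> k hk; rewrite ext_out // mul0r.
  have := congr1 (fun X : 'rV[R]_t => X 0 j) wA; rewrite !mxE => <-.
  apply/eqP; rewrite subr_eq0; apply/eqP; apply: eq_bigr => i _.
  by rewrite /ext /= valK; congr (_ * _); rewrite /A mxE.
have ut : u t = 1 by rewrite /u eqxx ext_out ?ltnn // subr0.
have uout : forall k : 'I_m, (t < k)%N -> u k = 0.
  move=> k hk; rewrite /u ext_out; last by rewrite -leqNgt ltnW.
  by rewrite subr0 (_ : (k == t) = false) // ; apply/negbTE; rewrite neq_ltn hk orbT.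
have sq : M t t - (c *m invmx A *m b) 0 0 = quad M u.
  have qu : quad M u = \sum_(l < m) u l * \sum_(k < m) u k * M k l.
    rewrite /quad exchange_big; apply: eq_bigr => l _; rewrite big_distrr.
    by apply: eq_bigr => k _ /=; ring.
  rewrite qu (@sum_single _ _ t); last first.
    move=> l hl; case: (ltngtP l t) => [h|h|h].
    - by rewrite KF // mulr0.
    - by rewrite uout // mul0r.
    - by move: hl; rewrite (_ : l = t) ?eqxx //; apply: val_inj.
  rewrite ut mul1r /u.
  under eq_bigr => k _ do rewrite mulrBl.
  rewrite big_split /= sumrN (bigD1 t) //= eqxx mul1r big1 ?addr0; last first.
    by move=> k /negbTE ->; rewrite mul0r.
  rewrite (sum_restr le); last by move=> k hk; rewrite ext_out // mul0r.
  congr (_ - _); rewrite -/wv mxE; apply: eq_bigr => i _.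
  by rewrite /ext /= valK; congr (_ * _); rewrite /A mxE.
rewrite sq; split.
  by apply: PD; exists t; rewrite ut oner_neq0.
have -> : v = (fun k => u k + (v k - u k)) by apply: funext => k; rewrite addrC subrK.
rewrite (@quadD _ _ M u (fun k => v k - u k) sym).
have -> : \sum_(l < m) (v l - u l) * \sum_(k < m) u k * M k l = 0.
  rewrite big1 // => l _; case: (ltngtP l t) => [h|h|h].
  - by rewrite KF // mulr0.
  - by rewrite uout // vout // subrr mul0r.
  - by rewrite (_ : l = t) ?vt ?ut ?subrr ?mul0r //; apply: val_inj.
by rewrite mulr0 addr0 lerDl quad_ge0.
Qed.
Lemma sum_pair_nat (R : realType) d (F : nat -> nat -> R) r :
  \sum_(0 <= k < r * d) F (k %/ d)%N (k %% d)%N = \sum_(i < r) \sum_(j < d) F i j.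
Proof.
elim: r => [|r IH]; first by rewrite mul0n big_geq // big_ord0.
rewrite big_ord_recr /= -IH mulSnr (big_cat_nat (n:=r * d)) ?leq_addr //=.
congr (_ + _).
case: d F {IH} => [|d] F; first by rewrite addn0 big_geq // big_ord0.
rewrite -{1}(add0n (r * d.+1)%N) big_addn addKn big_mkord.
apply: eq_bigr => j _.
rewrite addnC divnMDl // modnMDl divn_small ?addn0 ?modn_small //.
Qed.

Lemma sum_pair (R : realType) d (F : nat -> nat -> R) :
  \sum_(k < d ^ 2) F (k %/ d)%N (k %% d)%N = \sum_(i < d) \sum_(j < d) F i j.
Proof.
by rewrite -(big_mkord xpredT (fun k => F (k %/ d)%N (k %% d)%N)) -mulnn sum_pair_nat.
Qed.

Lemma sum_delta (R : realType) d a (X : nat -> R) : (a < d)%N ->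
  \sum_(i < d) (a == i)%:R * X i = X a.
Proof.
move=> h; rewrite (bigD1 (Ordinal h)) //= eqxx mul1r big1 ?addr0 // => i hi.
rewrite (_ : (a == i) = false) ?mul0r //; apply/negbTE; apply: contra hi => /eqP e.
by apply/eqP/val_inj.
Qed.

Definition Aent (R : realType) (d i j : nat) : R :=
  if i == j then 1 else - (d%:R)^-1.
Definition Bent (R : realType) (d i j : nat) : R :=
  (d%:R / (d.+1)%:R) * (1 + (i == j)%:R).
Definition Psi0 (R : realType) d : 'M[R]_(d ^ 2) :=
  \matrix_(k < d ^ 2, l < d ^ 2) (Bent R d (k %/ d)%N (l %/ d)%N * Bent R d (k %% d)%N (l %% d)%N).

Lemma Gamma_ent (R : realType) n k l :
  Gamma R n k l = Aent R n.-1 (k %/ n.-1)%N (l %/ n.-1)%N * Aent R n.-1 (k %% n.-1)%N (l %% n.-1)%N.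
Proof.
rewrite mxE /Aent.
case: eqP => _; case: eqP => _ /=; rewrite ?mulr1 ?mul1r //.
by rewrite mulrNN expr2 invfM.
Qed.

Lemma AB1 (R : realType) d a b : (0 < d)%N -> (a < d)%N -> (b < d)%N ->
  \sum_(i < d) Aent R d a i * Bent R d i b = (a == b)%:R.
Proof.
move=> d0 ha hb.
have dn : (d%:R : R) != 0 by rewrite pnatr_eq0 -lt0n.
have d1n : ((d.+1)%:R : R) != 0 by rewrite pnatr_eq0.
have E : forall i : 'I_d, Aent R d a i * Bent R d i b =
   (d%:R / (d.+1)%:R) * ((a == i)%:R * (1 + d%:R^-1) - d%:R^-1 +
    (b == i)%:R * Aent R d a b).
  move=> i; rewrite /Aent /Bent (eq_sym (val i) b).
  case Ea: (a == i); case Eb: (b == i); rewrite /=.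
  - by rewrite (_ : a == b) ?(eqP Ea) ?(eqP Eb) //; ring.
  - by rewrite (_ : (a == b) = false) ?(eqP Ea) 1?eq_sym //; ring.
  - by rewrite (_ : (a == b) = false) ?(eqP Eb) //; ring.
  - ring.
rewrite (eq_bigr _ (fun i _ => E i)) -big_distrr /= !big_split /=.
rewrite (@sum_delta R d a (fun _ => 1 + d%:R^-1) ha) (@sum_delta R d b (fun _ => Aent R d a b) hb) sumrN sumr_const card_ord /Aent.
rewrite -mulr_natl; case: (a == b) => /=; by field; rewrite dn /= addrC natr1 pnatr_eq0.
Qed.

Lemma divmod_eq d (k l : nat) : (k %/ d == l %/ d)%N && (k %% d == l %% d)%N = (k == l).
Proof.
apply/andP/eqP => [[/eqP h1 /eqP h2]|->]; last by [].
by rewrite (divn_eq k d) (divn_eq l d) h1 h2.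
Qed.

Lemma Gamma_Psi0 (R : realType) n : (2 <= n)%N ->
  Gamma R n *m Psi0 R n.-1 = 1%:M.
Proof.
move=> hn; set d := n.-1.
have d0 : (0 < d)%N by rewrite /d -ltnS prednK // (leq_trans _ hn).
apply/matrixP => k k'; rewrite !mxE.
pose F := fun i j => Aent R d (k %/ d)%N i * Aent R d (k %% d)%N j *
     (Bent R d i (k' %/ d)%N * Bent R d j (k' %% d)%N).
transitivity (\sum_(l < d ^ 2) F (l %/ d)%N (l %% d)%N).
  by apply: eq_bigr => l _; rewrite Gamma_ent mxE.
rewrite (@sum_pair R d F) /F.
transitivity ((\sum_(i < d) Aent R d (k %/ d)%N i * Bent R d i (k' %/ d)%N) *
    (\sum_(j < d) Aent R d (k %% d)%N j * Bent R d j (k' %% d)%N)).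
  rewrite big_distrl; apply: eq_bigr => i _; rewrite big_distrr.
  by apply: eq_bigr => j _ /=; ring.
have hk : (k < d ^ 2)%N by [].
have hk' : (k' < d ^ 2)%N by [].
rewrite !AB1 // ?ltn_mod ?ltn_divLR // -?expn2 //.
by rewrite -natrM mulnb divmod_eq.
Qed.

Lemma quad_group (R : realType) m (x : 'I_m -> R) (g : 'I_m -> nat) D :
  (forall k, (g k < D)%N) ->
  \sum_(k < m) \sum_(l < m) x k * x l * (g k == g l)%:R =
  \sum_(r < D) (\sum_(k < m) (g k == r)%:R * x k) ^+ 2.
Proof.
move=> hg; symmetry.
transitivity (\sum_(r < D) \sum_(k < m) \sum_(l < m)
   ((g k == r)%:R * x k) * ((g l == r)%:R * x l)).
  apply: eq_bigr => r _; rewrite expr2 big_distrl; apply: eq_bigr => k _.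
  by rewrite big_distrr.
rewrite exchange_big; apply: eq_bigr => k _ /=.
rewrite exchange_big; apply: eq_bigr => l _ /=.
rewrite (eq_bigr (fun r : 'I_D => (g k == r)%:R * ((g l == r)%:R * x k * x l)));
  last by move=> r _; ring.
rewrite (@sum_delta R D (g k) (fun r => (g l == r)%:R * x k * x l)) //.
by rewrite [g l == _]eq_sym; ring.
Qed.

Lemma Psi0_PD (R : realType) d : PDm (Psi0 R d).
Proof.
move=> x [k0 hk0].
set c := (d%:R / (d.+1)%:R : R).
have d0 : (0 < d)%N by rewrite lt0n; apply/eqP => e; have := ltn_ord k0; rewrite {2}e.
have c0 : 0 < c by rewrite divr_gt0 ?ltr0n.
have c1 : c <= 1 by rewrite ler_pdivrMr ?ltr0n // mul1r ler_nat.
have -> : quad (Psi0 R d) x = c ^+ 2 * (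
   \sum_(k < d ^ 2) \sum_(l < d ^ 2) x k * x l * ((fun _ => 0%N) k == (fun _ => 0%N) l)%:R +
   \sum_(k < d ^ 2) \sum_(l < d ^ 2) x k * x l * ((fun k : 'I_(d ^ 2) => (k %/ d)%N) k == (fun k : 'I_(d ^ 2) => (k %/ d)%N) l)%:R +
   \sum_(k < d ^ 2) \sum_(l < d ^ 2) x k * x l * ((fun k : 'I_(d ^ 2) => (k %% d)%N) k == (fun k : 'I_(d ^ 2) => (k %% d)%N) l)%:R +
   \sum_(k < d ^ 2) \sum_(l < d ^ 2) x k * x l * ((fun k : 'I_(d ^ 2) => val k) k == (fun k : 'I_(d ^ 2) => val k) l)%:R).
  rewrite /quad -!big_split big_distrr /=; apply: eq_bigr => k _.
  rewrite -!big_split big_distrr /=; apply: eq_bigr => l _.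
  rewrite mxE /Bent -/c.
  have := divmod_eq d k l; case: (k %/ d == l %/ d)%N; case: (k %% d == l %% d)%N => /= <- /=; ring.
rewrite (@quad_group R _ x (fun _ => 0%N) 1) //.
rewrite (@quad_group R _ x (fun k : 'I_(d ^ 2) => (k %/ d)%N) d); last first.
  by move=> k; rewrite ltn_divLR // -expn2.
rewrite (@quad_group R _ x (fun k : 'I_(d ^ 2) => (k %% d)%N) d); last first.
  by move=> k; rewrite ltn_mod.
rewrite (@quad_group R _ x (fun k : 'I_(d ^ 2) => val k) (d ^ 2)) //.
apply: mulr_gt0; first exact: exprn_gt0.
apply: (@lt_le_trans _ _ ((\sum_(k < d ^ 2) ((k : nat) == k0)%:R * x k) ^+ 2)).
  rewrite (@sum_single _ _ k0); last first.
    move=> l hl; rewrite (_ : ((l : nat) == k0) = false) ?mul0r //.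
    by apply/negbTE.
  by rewrite eqxx mul1r lt_neqAle sqr_ge0 andbT eq_sym sqrf_eq0.
rewrite -[X in X <= _]add0r; apply: lerD.
  by rewrite !addr_ge0 ?sumr_ge0 // => i _; exact: sqr_ge0.
rewrite [X in _ <= X](bigD1 k0) //= lerDl.
by rewrite sumr_ge0 // => i _; exact: sqr_ge0.
by move=> k; apply: ltn_ord.
Qed.

Definition uu (R : realType) (p i : nat) : R :=
  if i == p then 1 else if (i < p)%N then - ((p.+1)%:R)^-1 else 0.

Lemma sum_upto (R : realType) d p (G : nat -> R) : (p < d)%N ->
  (forall i, (p < i)%N -> G i = 0) ->
  \sum_(i < d) G i = \sum_(i < p) G i + G p.
Proof.
move=> hp hG.
have -> : \sum_(i < p) G i + G p = \sum_(i < p.+1) G i. by rewrite big_ord_recr.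
rewrite (big_ord_widen _ G hp) [RHS]big_mkcond /=.
apply: eq_bigr => i _; case: ifP => // /negbT; rewrite -leqNgt => h.
exact: hG.
Qed.





Lemma uu_out (R : realType) p i : (p < i)%N -> uu R p i = 0.
Proof.
move=> hi; have h1 : (i == p) = false by apply/negbTE; rewrite neq_ltn hi orbT.
have h2 : (i < p)%N = false by apply/negbTE; rewrite -leqNgt ltnW.
by rewrite /uu h1 h2.
Qed.

Lemma uu_in (R : realType) p i : (i < p)%N -> uu R p i = - ((p.+1)%:R)^-1.
Proof. by move=> hi; rewrite /uu ltn_eqF // hi. Qed.

Lemma uu_p (R : realType) p : uu R p p = 1.
Proof. by rewrite /uu eqxx. Qed.

Lemma sum_uu (R : realType) d p : (p < d)%N ->
  \sum_(i < d) uu R p i = ((p.+1)%:R)^-1.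
Proof.
move=> hp; rewrite (@sum_upto R d p) //; last by move=> i; apply: uu_out.
rewrite (eq_bigr (fun _ => - ((p.+1)%:R)^-1)); last by move=> i _; rewrite uu_in.
rewrite sumr_const card_ord uu_p -mulr_natl.
have h : ((p.+1)%:R : R) != 0 by rewrite pnatr_eq0.
by rewrite -natr1; field; rewrite natr1.
Qed.

Lemma sum_uu2 (R : realType) d p : (p < d)%N ->
  \sum_(i < d) uu R p i ^+ 2 = 1 + p%:R / ((p.+1)%:R) ^+ 2.
Proof.
move=> hp; rewrite (@sum_upto R d p (fun i => uu R p i ^+ 2)) //; last first.
  by move=> i hi; rewrite uu_out // expr0n.
rewrite (eq_bigr (fun _ => (- ((p.+1)%:R)^-1) ^+ 2)); last by move=> i _; rewrite uu_in.
rewrite sumr_const card_ord uu_p -mulr_natl.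
have h : ((p.+1)%:R : R) != 0 by rewrite pnatr_eq0.
by rewrite -natr1; field; rewrite natr1.
Qed.

Lemma Wform (R : realType) d p : (p < d)%N ->
  \sum_(i < d) \sum_(j < d) uu R p i * uu R p j * Bent R d i j =
  (d%:R / (d.+1)%:R) * ((p.+2)%:R / (p.+1)%:R).
Proof.
move=> hp.
transitivity ((d%:R / (d.+1)%:R) * ((\sum_(i < d) uu R p i) * (\sum_(j < d) uu R p j)
   + \sum_(i < d) uu R p i * \sum_(j < d) ((i : nat) == j)%:R * uu R p j)).
  have E : forall i : 'I_d, \sum_(j < d) uu R p i * uu R p j * Bent R d i j =
     (d%:R / (d.+1)%:R) * (uu R p i * \sum_(j < d) uu R p j) +
     (d%:R / (d.+1)%:R) * (uu R p i * \sum_(j < d) ((i : nat) == j)%:R * uu R p j).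
    move=> i; rewrite !big_distrr -big_split; apply: eq_bigr => j _ /=.
    by rewrite /Bent; ring.
  rewrite (eq_bigr _ (fun i _ => E i)) big_split /= -!big_distrr /= -big_distrl /=.
  by rewrite mulrDr.
rewrite [X in _ + X](eq_bigr (fun i : 'I_d => uu R p i * uu R p i)); last by move=> i _; rewrite (@sum_delta R d i (uu R p)).
under eq_bigr => i _ do rewrite -expr2.
rewrite sum_uu // sum_uu2 //.
have h : ((p.+1)%:R : R) != 0 by rewrite pnatr_eq0.
congr (_ * _); rewrite -[(p.+2)%:R]natr1 -[(p.+1)%:R]natr1.
by field; rewrite natr1.
Qed.

Lemma quad_test (R : realType) d p q : (p < d)%N -> (q < d)%N ->
  quad (Psi0 R d) (fun k => uu R p (k %/ d)%N * uu R q (k %% d)%N) =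
  ((d%:R / (d.+1)%:R) * ((p.+2)%:R / (p.+1)%:R)) *
  ((d%:R / (d.+1)%:R) * ((q.+2)%:R / (q.+1)%:R)).
Proof.
move=> hp hq; rewrite /quad.
pose G := fun a b : nat => \sum_(i < d) \sum_(j < d)
   uu R p a * uu R q b * (uu R p i * uu R q j) * (Bent R d a i * Bent R d b j).
transitivity (\sum_(k < d ^ 2) G (k %/ d)%N (k %% d)%N).
  apply: eq_bigr => k _.
  pose F := fun i j : nat => uu R p (k %/ d)%N * uu R q (k %% d)%N * (uu R p i * uu R q j) *
     (Bent R d (k %/ d)%N i * Bent R d (k %% d)%N j).
  transitivity (\sum_(l < d ^ 2) F (l %/ d)%N (l %% d)%N).
    by apply: eq_bigr => l _; rewrite mxE /F.
  by rewrite (@sum_pair R d F).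
rewrite (@sum_pair R d G) -(Wform R hp) -(Wform R hq) /G.
rewrite big_distrl; apply: eq_bigr => a _ /=.
rewrite exchange_big big_distrl; apply: eq_bigr => i _ /=.
rewrite big_distrr; apply: eq_bigr => b _ /=.
rewrite big_distrr; apply: eq_bigr => j _ /=.
ring.
Qed.

Lemma invGamma (R : realType) n : (2 <= n)%N -> invmx (Gamma R n) = Psi0 R n.-1.
Proof.
move=> hn; have GP := Gamma_Psi0 R hn.
have [uG _] := mulmx1_unit GP.
by rewrite -[RHS](mulKmx uG) GP mulmx1.
Qed.

Lemma alg_XQ (R : realType) (c x y : R) : 0 < x -> 0 < y ->
  x / (x + 1) * (y / (y + 1)) * (c * ((x + 1) / x) * (c * ((y + 1) / y))) = c * c.
Proof.
move=> x0 y0.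
have x1 : x + 1 != 0 by rewrite gt_eqF // addr_gt0.
have y1 : y + 1 != 0 by rewrite gt_eqF // addr_gt0.
by field; rewrite x1 y1 !gt_eqF.
Qed.

Lemma a_bound (R : realType) n (hn : (2 <= n)%N) (t : 'I_((n.-1) ^ 2)) :
  ((t %/ n.-1)%N.+1%:R / (t %/ n.-1)%N.+2%:R) * ((t %% n.-1)%N.+1%:R / (t %% n.-1)%N.+2%:R)
  <= schur_inv (invmx (Gamma R n)) t.
Proof.
rewrite invGamma //.
set d := n.-1.
have d0 : (0 < d)%N by rewrite /d -ltnS prednK // (leq_trans _ hn).
set p := (t %/ d)%N; set q := (t %% d)%N.
have hp : (p < d)%N by rewrite /p ltn_divLR // -expn2.
have hq : (q < d)%N by rewrite /q ltn_mod.
have sym : forall i j, Psi0 R d i j = Psi0 R d j i.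
  by move=> i j; rewrite !mxE /Bent [(j %/ d)%N == _]eq_sym [(j %% d)%N == _]eq_sym.
have vt : uu R p (t %/ d)%N * uu R q (t %% d)%N = 1 by rewrite !uu_p mulr1.
have vout : forall k : 'I_(d ^ 2), (t < k)%N -> uu R p (k %/ d)%N * uu R q (k %% d)%N = 0.
  move=> k hk /=.
  have hkt : (p <= k %/ d)%N by rewrite /p leq_div2r // ltnW.
  rewrite leq_eqVlt in hkt; case/orP: hkt => [/eqP e|h].
    rewrite -e uu_p mul1r uu_out //.
    have := divn_eq k d; have := divn_eq t d; rewrite -/p -/q -e => h1 h2.
    lia.
  by rewrite uu_out // mul0r.
have [s0 sle] := @schur_main R _ (Psi0 R d) t
   (fun k => uu R p (k %/ d)%N * uu R q (k %% d)%N) sym (@Psi0_PD R d) vt vout.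
move: sle; rewrite quad_test //.
set a := schur_inv _ t => h.
set c := (d%:R / d.+1%:R : R).
have c0 : 0 < c by rewrite divr_gt0 ?ltr0n.
have c1 : c <= 1 by rewrite ler_pdivrMr ?ltr0n // mul1r ler_nat.
have hp1 : ((p.+1)%:R : R) != 0 by rewrite pnatr_eq0.
have hq1 : ((q.+1)%:R : R) != 0 by rewrite pnatr_eq0.
have hp2 : ((p.+2)%:R : R) != 0 by rewrite pnatr_eq0.
have hq2 : ((q.+2)%:R : R) != 0 by rewrite pnatr_eq0.
set Q := c * _ * _ in h.
have Q0 : 0 < Q by apply: lt_le_trans h.
apply: (@le_trans _ _ Q^-1).
  rewrite -[Q^-1]div1r ler_pdivlMr //.
  have -> : (p.+1)%:R / (p.+2)%:R * ((q.+1)%:R / (q.+2)%:R) * Q = c * c.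
    by rewrite /Q -/c -[(p.+2)%:R]natr1 -[(q.+2)%:R]natr1 alg_XQ ?ltr0n.
  by rewrite -expr2 expr_le1 // ltW.
by rewrite -[a]invrK lef_pV2 ?posrE // invr_gt0.
Qed.

Lemma maxnorm_Psi0 (R : realType) d : maxnorm (Psi0 R d) <= 4.
Proof.
rewrite /maxnorm; apply: (big_ind (fun x : R => x <= 4)) => //.
  by move=> x y hx hy; rewrite ge_max hx hy.
move=> i _; apply: (big_ind (fun x : R => x <= 4)) => //.
  by move=> x y hx hy; rewrite ge_max hx hy.
move=> j _; rewrite mxE /Bent.
set c := (d%:R / d.+1%:R : R).
have c0 : 0 <= c by rewrite divr_ge0 ?ler0n.
have c1 : c <= 1 by rewrite ler_pdivrMr ?ltr0n // mul1r ler_nat.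
have b1 : forall b : bool, 0 <= c * (1 + b%:R) <= 2.
  by move=> [] /=; apply/andP; split; lra.
have := b1 (i %/ d == j %/ d)%N; have := b1 (i %% d == j %% d)%N.
set u := c * (1 + _); set w := c * (1 + _) => /andP [h1 h2] /andP [h3 h4].
rewrite ger0_norm ?mulr_ge0 //; nra.
Qed.


Lemma nat_ineq q : ((q.+2) * (q.+1) <= 6 * 2 ^ q)%N.
Proof.
elim: q => [//|q IH].
rewrite expnS.
case: q IH => [//|q] IH.
move: IH; set z := (2 ^ q.+1)%N => IH; nia.
Qed.

Lemma pow_S (R : realType) (y : R) (e : R) (n : nat) : 0 <= y ->
  (y `^ e) ^+ n = y `^ (e * n%:R).
Proof. by move=> y0; rewrite -powR_mulrn ?powR_ge0 // powRrM. Qed.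

Lemma pointwise (R : realType) (y : R) (q : nat) : 1 <= y ->
  y `^ ((q.+2)%:R^-1) <= 4 + 6 * ((q.+1)%:R * (q.+2)%:R)^-1 * y `^ (2^-1).
Proof.
move=> y1; have y0 : 0 <= y by apply: le_trans y1.
set r : R := (q.+2)%:R.
have r0 : 0 < r by rewrite ltr0n.
set S := y `^ ((2 * r)^-1).
have S0 : 0 <= S by apply: powR_ge0.
have ST : S ^+ 2 = y `^ (r^-1).
  rewrite pow_S //; congr (_ `^ _); field; exact: lt0r_neq0.
have SH : S ^+ 2 * S ^+ q = y `^ (2^-1).
  rewrite -exprD addnC pow_S //; congr (_ `^ _).
  rewrite (_ : (q + 2)%N%:R = r); last by rewrite /r addn2.
  field; exact: lt0r_neq0.
rewrite -ST -SH.
set w : R := ((q.+1)%:R * r)^-1.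
have w0 : 0 < w by rewrite invr_gt0 mulr_gt0 ?ltr0n.
have N : (q.+1)%:R * r <= 6 * 2 ^+ q.
  have := nat_ineq q; rewrite -(ler_nat R) !natrM natrX /r mulrC => h.
  by apply: le_trans h _.
have [h|h] := leP (S ^+ 2) 4.
  apply: (le_trans h); rewrite lerDl; apply: mulr_ge0; first exact: mulr_ge0 (ltW w0).
  by apply: mulr_ge0; apply: exprn_ge0.
have S2 : 2 <= S.
  rewrite leNgt; apply/negP => hS.
  have : S ^+ 2 <= 4 by rewrite expr2; nra.
  by rewrite leNgt h.
have Sq : 2 ^+ q <= S ^+ q by apply: lerXn2r => //; rewrite nnegrE.
have B : 1 <= 6 * w * S ^+ q.
  have : 1 <= 6 * w * 2 ^+ q.
    rewrite /w -mulrA mulrC -mulrA ler_pdivlMl ?mulr_gt0 ?ltr0n //.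
    by rewrite mulr1 mulrC.
  move=> h1; apply: (le_trans h1); rewrite ler_pM2l // mulr_gt0 //; lra.
set a := S ^+ 2 in h *; set b := 6 * w * S ^+ q in B *.
have a0 : 0 <= a by apply: exprn_ge0.
have -> : 6 * w * (a * S ^+ q) = a * b by rewrite /b; ring.
nra.
Qed.

Lemma tele (R : realType) d :
  \sum_(q < d) ((q.+1)%:R * (q.+2)%:R)^-1 = 1 - ((d.+1)%:R)^-1 :> R.
Proof.
elim: d => [|d IH]; first by rewrite big_ord0 invr1 subrr.
rewrite big_ord_recr /= IH.
have h1 : ((d.+1)%:R : R) != 0 by rewrite pnatr_eq0.
rewrite -[(d.+2)%:R]natr1 -[(d.+1)%:R]natr1.
field; rewrite natr1 h1 /=.
by rewrite natr1 pnatr_eq0.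
Qed.

Lemma half_sq (R : realType) (y : R) : 0 < y -> y `^ (2^-1) * y `^ (2^-1) = y.
Proof.
move=> y0; rewrite -powRD; last by rewrite gt_eqF // implybT.
by rewrite (_ : 2^-1 + 2^-1 = 1 :> R) ?powRr1 // ?ltW //; lra.
Qed.

Lemma oneD (R : realType) (y : R) d : 1 <= y ->
  \sum_(q < d) y `^ (- ((q.+1)%:R / (q.+2)%:R)) <=
  4 * d%:R / y + 6 * y `^ (- 2^-1).
Proof.
move=> y1; have y0 : 0 < y by apply: lt_le_trans y1.
have yn : y != 0 by rewrite gt_eqF.
have E : forall q : nat, y `^ (- ((q.+1)%:R / (q.+2)%:R)) = y^-1 * y `^ ((q.+2)%:R^-1).
  move=> q.
  have h : ((q.+2)%:R : R) != 0 by rewrite pnatr_eq0.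
  have -> : - ((q.+1)%:R / (q.+2)%:R) = -1 + (q.+2)%:R^-1 :> R.
    rewrite -[(q.+2)%:R]natr1 in h *; by field.
  by rewrite powRD ?yn ?implybT // powR_inv1 // ltW.
under eq_bigr => q _ do rewrite E.
rewrite -big_distrr /=.
apply: (@le_trans _ _ (y^-1 * \sum_(q < d) (4 + 6 * ((q.+1)%:R * (q.+2)%:R)^-1 * y `^ (2^-1)))).
  rewrite ler_pM2l ?invr_gt0 //; apply: ler_sum => q _; exact: pointwise.
rewrite big_split /= sumr_const card_ord.
under eq_bigr => q _ do rewrite mulrAC.
rewrite -big_distrr /= tele.
set h := y `^ (2^-1).
have h0 : 0 < h by apply: powR_gt0.
have hh : h * h = y by apply: half_sq.
rewrite powRN -/h.
have t0 : 0 <= ((d.+1)%:R : R)^-1 by rewrite invr_ge0 ler0n.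
set t := ((d.+1)%:R : R)^-1 in t0 *.
rewrite -[4 *+ d]mulr_natr -hh.
have hn : h != 0 by rewrite gt_eqF.
have -> : (h * h)^-1 * (4 * d%:R + 6 * h * (1 - t)) =
   4 * d%:R / (h * h) + 6 * ((1 - t) * h^-1) by field.
rewrite lerD2l ler_pM2l; last by lra.
rewrite ler_pdivrMr // mulVf //; lra.
Qed.

Lemma ff_ge0 (R : realType) p : 0 <= (p.+1)%:R / (p.+2)%:R :> R.
Proof. by rewrite divr_ge0 ?ler0n. Qed.

Lemma inner_bound (R : realType) (x f : R) d : 1 <= x -> 0 <= f ->
  \sum_(q < d) x `^ (- (f * ((q.+1)%:R / (q.+2)%:R))) <=
  4 * d%:R * x `^ (- f) + 6 * (x `^ (2^-1)) `^ (- f).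
Proof.
move=> x1 f0.
have y1 : 1 <= x `^ f by rewrite -(powRr0 x) ler_powR.
under eq_bigr => q _ do rewrite -mulrN powRrM.
apply: (le_trans (oneD d y1)).
rewrite powRN -mulrA mulrC -mulrA [_ * 4]mulrC mulrA; apply: lerD => //.
by rewrite -!powRrM !mulrN [f * _]mulrC.
Qed.

Lemma twoD (R : realType) (al : R) d : 1 <= al -> (0 < d)%N ->
  \sum_(p < d) \sum_(q < d)
     (al * (d ^ 2)%:R) `^ (- (((p.+1)%:R / (p.+2)%:R) * ((q.+1)%:R / (q.+2)%:R)))
  <= 100 * (al `^ (4%:R^-1))^-1.
Proof.
move=> a1 d0.
set D : R := d%:R.
have D1 : 1 <= D by rewrite /D ler1n.
have D0 : 0 < D by lra.
set x := al * (d ^ 2)%:R.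
have xE : x = al * (D * D) by rewrite /x natrX expr2.
have x1 : 1 <= x by rewrite xE -[1]mulr1 ler_pM //; nra.
set s := x `^ (2^-1).
have s1 : 1 <= s by rewrite /s -[X in X <= _](powRr0 x) ler_powR // invr_ge0.
apply: (@le_trans _ _ (\sum_(p < d) (4 * D * x `^ (- ((p.+1)%:R / (p.+2)%:R))
     + 6 * s `^ (- ((p.+1)%:R / (p.+2)%:R))))).
  by apply: ler_sum => p _; apply: inner_bound => //; apply: ff_ge0.
rewrite big_split /= -!big_distrr /=.
apply: (@le_trans _ _ (4 * D * (4 * D / x + 6 * x `^ (- 2^-1)) +
                       6 * (4 * D / s + 6 * s `^ (- 2^-1)))).
  apply: lerD; rewrite ler_pM2l //; try exact: oneD; lra.
set u := al `^ (4%:R^-1).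
have u1 : 1 <= u by rewrite /u -[X in X <= _](powRr0 al) ler_powR // invr_ge0.
have a0 : 0 <= al by lra.
have sa : al `^ (2^-1) = u * u.
  rewrite /u -powRD; last by rewrite gt_eqF ?implybT //; lra.
  by congr (_ `^ _); rewrite -mulr2n -mulr_natr; field.
have sE : s = u * u * D.
  rewrite /s /x powRM ?ler0n // ?sa; congr (_ * _).
  rewrite natrX -powR_mulrn ?ler0n // -powRrM.
  by rewrite (_ : 2%:R * 2^-1 = 1 :> R) ?powRr1 ?ler0n //; field.
have xs : x `^ (- 2^-1) = s^-1 by rewrite powRN.
set E := D `^ (2^-1).
have E1 : 1 <= E by rewrite /E -[X in X <= _](powRr0 D) ler_powR // invr_ge0.
have ss : s `^ (- 2^-1) = (u * E)^-1.
  rewrite powRN sE powRM ?mulr_ge0 ?ler0n //; try lra.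
  rewrite -/E; congr ((_ * _)^-1).
  by rewrite powRM ?half_sq //; lra.
have alE : al = u * u * (u * u).
  by rewrite -sa half_sq //; lra.
have un : u != 0 by rewrite gt_eqF //; lra.
have En : E != 0 by rewrite gt_eqF //; lra.
have Dn : D != 0 by rewrite gt_eqF.
rewrite xs ss sE xE alE.
have -> : 4 * D * (4 * D / (u * u * (u * u) * (D * D)) + 6 * (u * u * D)^-1) +
   6 * (4 * D / (u * u * D) + 6 * (u * E)^-1) =
   16 * u^-1 ^+ 4 + 48 * u^-1 ^+ 2 + 36 * u^-1 * E^-1 by field; rewrite En un -/D Dn.
have v0 : 0 < u^-1 by rewrite invr_gt0; lra.
have v1 : u^-1 <= 1 by rewrite invf_le1 //; lra.
have w0 : 0 < E^-1 by rewrite invr_gt0; lra.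
have w1 : E^-1 <= 1 by rewrite invf_le1 //; lra.
set v := u^-1 in v0 v1 *; set w := E^-1 in w0 w1 *.
rewrite -[100 / u]/(100 * v).
have h2 : v ^+ 2 <= v by rewrite expr2; nra.
have h4 : v ^+ 4 <= v by rewrite (_ : 4 = 2 * 2)%N // exprM; nra.
nra.
Qed.

Lemma gK (R : realType) :
  100 <= 1 + 2 * expR (4 / expR 1) + 2 * expR (8 / expR 1) + expR (32 / expR (1 : R)).
Proof.
set e := expR (1 : R).
have e2 : 2 <= e by have := expR_ge1Dx (1 : R); rewrite /e; lra.
have h1 : 1 / 2 <= expR (- (2^-1) : R) by have := expR_ge1Dx (- (2^-1) : R); lra.
have h2 : expR (2^-1 : R) <= 2.
  have := expRxMexpNx_1 (2^-1 : R); have := expR_gt0 (2^-1 : R); nra.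
have e4 : e <= 4.
  rewrite /e (_ : (1 : R) = 2%:R * 2^-1); last by field.
  rewrite expRM_natl expr2; have := expR_gt0 (2^-1 : R); nra.
have e0 : 0 < e by lra.
have h8 : 8 <= 32 / e by rewrite ler_pdivlMr //; lra.
have E8 : 256 <= expR (8 : R).
  rewrite (_ : (8 : R) = 8%:R * 1); last by rewrite mulr1.
  rewrite expRM_natl -/e.
  have : 2 ^+ 8 <= e ^+ 8 by apply: lerXn2r => //; rewrite nnegrE; lra.
  by rewrite (_ : 2 ^+ 8 = 256 :> R) //; rewrite -natrX.
have := expR_ge0 (4 / e); have := expR_ge0 (8 / e).
have : expR 8 <= expR (32 / e) by rewrite ler_expR.
lra.
Qed.

Unset Implicit Arguments.

Theorem mainTheorem8 (R : realType) (n : nat) (hn : (2 <= n)%N) :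
  Gamma R n \in unitmx /\
  maxnorm (invmx (Gamma R n)) <= 4 /\
  (forall alpha : R, 1 <= alpha ->
     \sum_(k < (n.-1) ^ 2)
        (alpha * ((n.-1) ^ 2)%:R) `^ (- schur_inv (invmx (Gamma R n)) k)
     <= gfun alpha).
Proof.
split; first by have [uG _] := mulmx1_unit (Gamma_Psi0 R hn).
split; first by rewrite invGamma // maxnorm_Psi0.
move=> al a1.
have d0 : (0 < n.-1)%N by rewrite -ltnS prednK // (leq_trans _ hn).
set x := al * ((n.-1) ^ 2)%:R.
have hd : 1 <= ((n.-1) ^ 2)%:R :> R by rewrite ler1n expn_gt0 d0.
have x1 : 1 <= x by rewrite /x; nra.
apply: (@le_trans _ _ (\sum_(k < (n.-1) ^ 2)
   (fun p q : nat => x `^ (- (((p.+1)%:R / (p.+2)%:R) * ((q.+1)%:R / (q.+2)%:R))))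
   (k %/ n.-1)%N (k %% n.-1)%N)).
  apply: (@ler_sum _ _ _ _ _ _) => k _ /=; apply: (ler_powR x1).
  by rewrite lerN2; apply: a_bound.
rewrite (@sum_pair R n.-1 (fun p q : nat =>
   x `^ (- (((p.+1)%:R / (p.+2)%:R) * ((q.+1)%:R / (q.+2)%:R))))).
apply: (le_trans (twoD a1 d0)).
rewrite /gfun ler_wpM2r ?invr_ge0 ?powR_ge0 //.
exact: gK.
Qed.
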